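(* Let $\kappa$ be an uncountable regular cardinal and suppose $2^\omega>\kappa$. Then there is a subset of $\kappa^\kappa$ which is open (in the usual topology) and $\kappa$-Borel but not $\kappa$-open.
   Context: The usual topology on $\kappa^\kappa$ is generated by the sets $N_\eta=\{\zeta\in\kappa^\kappa\mid\eta\subseteq\zeta\}$, $\eta:\alpha\to\kappa$, $\alpha<\kappa$. Basic $\kappa$-open sets are the sets $N_\eta=\{\zeta\in\kappa^\kappa\mid\eta\subseteq\zeta\}$ where $\eta:X\to\kappa$ with $X\subseteq\kappa$, $|X|<\kappa$, together with $\emptyset$. A set is $\kappa$-open if it is a union of at most $\kappa$ basic $\kappa$-open sets. The $\kappa$-Borel sets form the smallest class containing the basic $\kappa$-open sets and closed under complements, unions of at most $\kappa$ sets and intersections of at most $\kappa$ sets. *)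

(* Defs.v *)
(* The cardinal kappa is represented by a type K carrying a
   strict well-order [lt]; kappa^kappa is the function type K -> K. *)
From Stdlib Require Import Wellfounded.

Set Implicit Arguments.

Section Kappa.
Variable K : Type.
Variable lt : K -> K -> Prop.

Definition injective {A B : Type} (f : A -> B) : Prop :=
  forall x y, f x = f y -> x = y.

Definition strict_well_order : Prop :=
  well_founded lt /\
  (forall x y z, lt x y -> lt y z -> lt x z) /\
  (forall x y, lt x y \/ x = y \/ lt y x).

(* For X a subset of kappa: |X| < kappa, i.e. kappa does not inject into X. *)
Definition small (X : K -> Prop) : Prop :=
  ~ exists f : K -> {x : K | X x}, injective f.

(* kappa is a cardinal (initial ordinal): every proper initial segment has
   cardinality < kappa. *)
Definition is_cardinal : Prop := forall a : K, small (fun x => lt x a).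

Definition is_regular : Prop :=
  forall X : K -> Prop, small X -> exists b, forall x, X x -> lt x b.

Definition uncountable : Prop := ~ exists f : K -> nat, injective f.

Definition continuum_gt : Prop :=
  (exists f : K -> (nat -> bool), injective f) /\
  ~ exists g : (nat -> bool) -> K, injective g.

Definition kset := (K -> K) -> Prop.

(* N_eta for eta : D -> kappa, represented by a total function eta whose
   values outside D are irrelevant. *)
Definition N (D : K -> Prop) (eta : K -> K) : kset :=
  fun zeta => forall x, D x -> zeta x = eta x.

Definition usual_basic (B : kset) : Prop :=
  exists (a : K) (eta : K -> K), forall zeta, B zeta <-> N (fun x => lt x a) eta zeta.

Definition usual_open (U : kset) : Prop :=
  exists F : kset -> Prop,
    (forall B, F B -> usual_basic B) /\
    (forall zeta, U zeta <-> exists B, F B /\ B zeta).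

Definition kbasic (B : kset) : Prop :=
  (exists (D : K -> Prop) (eta : K -> K), small D /\
     forall zeta, B zeta <-> N D eta zeta) \/
  (forall zeta, ~ B zeta).

(* kappa-open: union of at most kappa basic kappa-open sets (indexed by K;
   repetitions and the empty basic set make this cover all families of size
   <= kappa, including the empty one). *)
Definition kopen (U : kset) : Prop :=
  exists F : K -> kset,
    (forall i, kbasic (F i)) /\
    (forall zeta, U zeta <-> exists i, F i zeta).

Inductive kBorel : kset -> Prop :=
  | kBorel_basic : forall B, kbasic B -> kBorel B
  | kBorel_compl : forall A, kBorel A -> kBorel (fun zeta => ~ A zeta)
  | kBorel_union : forall F : K -> kset, (forall i, kBorel (F i)) ->
      kBorel (fun zeta => exists i, F i zeta)
  | kBorel_inter : forall F : K -> kset, (forall i, kBorel (F i)) ->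
      kBorel (fun zeta => forall i, F i zeta)
  | kBorel_ext : forall A A', kBorel A -> (forall zeta, A zeta <-> A' zeta) ->
      kBorel A'.

End Kappa.

(* Main.v *)
Require Import Defs.
From Stdlib Require Import Classical ClassicalEpsilon FunctionalExtensionality ProofIrrelevance Lia.

Lemma acc_irrefl (K : Type) (lt : K -> K -> Prop) : forall x, Acc lt x -> ~ lt x x.
Proof. intros x H; induction H as [x _ IH]; intro Hx; exact (IH x Hx Hx). Qed.

Lemma small_single (K : Type) (Hunc : uncountable K) (x : K) : small (fun y => y = x).
Proof.
  intros [f Hf]. apply Hunc. exists (fun _ => 0). intros y z _. apply Hf.
  destruct (f y) as [u pu]; destruct (f z) as [v pv]. subst.
  f_equal; apply proof_irrelevance.
Qed.

Theorem proposition2p4 (K : Type) (lt : K -> K -> Prop)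
  (Hwo : strict_well_order lt)
  (Hcard : is_cardinal lt)
  (Hreg : is_regular lt)
  (Hunc : uncountable K)
  (Hcont : continuum_gt K) :
  exists U : kset K, usual_open lt U /\ kBorel U /\ ~ kopen U.
Proof.
  destruct Hwo as [Hwf [Htr Htri]].
  assert (Hirr : forall x, ~ lt x x) by (intro x; apply acc_irrefl, Hwf).
  assert (inh : inhabited K).
  { apply NNPP; intro H. apply Hunc. exists (fun x => False_rect nat (H (inhabits x))).
    intros x; exfalso; exact (H (inhabits x)). }
  assert (Hsucc : forall x, exists y, lt x y).
  { intro x. destruct (Hreg _ (@small_single K Hunc x)) as [b Hb]. exists b; auto. }
  set (sc := fun x => epsilon inh (fun y => lt x y)).
  assert (Hsc : forall x, lt x (sc x)) by (intro x; apply (epsilon_spec inh), Hsucc).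
  destruct inh as [x0].
  set (e := fix e (n : nat) : K := match n with 0 => x0 | S n => sc (e n) end).
  assert (emono : forall n m, n < m -> lt (e n) (e m)).
  { intros n m; induction m as [|m IH]; intro H; [lia|].
    simpl. destruct (PeanoNat.Nat.eq_dec n m) as [->|Hne]; [apply Hsc|].
    apply Htr with (e m); [apply IH; lia | apply Hsc]. }
  assert (einj : forall n m, e n = e m -> n = m).
  { intros n m H. destruct (PeanoNat.Nat.lt_trichotomy n m) as [h|[h|h]]; auto.
    - pose proof (emono _ _ h) as h'; rewrite H in h'; destruct (Hirr _ h').
    - pose proof (emono _ _ h) as h'; rewrite H in h'; destruct (Hirr _ h'). }
  assert (Xsmall : small (fun x => exists n, e n = x)).
  { intros [f Hf]. apply Hunc.
    exists (fun k => epsilon (inhabits 0) (fun n => e n = proj1_sig (f k))).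
    intros k k' H. apply Hf.
    pose proof (epsilon_spec (inhabits 0) _ (proj2_sig (f k))) as h1.
    pose proof (epsilon_spec (inhabits 0) _ (proj2_sig (f k'))) as h2.
    simpl in h1, h2. rewrite H in h1. rewrite h1 in h2.
    destruct (f k) as [u pu]; destruct (f k') as [v pv]. simpl in h2. subst.
    f_equal; apply proof_irrelevance. }
  destruct (Hreg _ Xsmall) as [a Ha].
  assert (ea : forall n, lt (e n) a) by (intro n; apply Ha; eauto).
  set (c0 := e 0). set (c1 := e 1). set (c2 := e 2).
  assert (n01 : c1 <> c0) by (intro H; apply einj in H; discriminate).
  assert (n20 : c2 <> c0) by (intro H; apply einj in H; discriminate).
  assert (n21 : c2 <> c1) by (intro H; apply einj in H; discriminate).
  exists (fun z => forall x, lt x a -> z x = c0 \/ z x = c1).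
  split; [|split].
  - exists (fun B => exists eta, (forall x, lt x a -> eta x = c0 \/ eta x = c1)
                              /\ B = N (fun x => lt x a) eta).
    split.
    + intros B [eta [_ ->]]. exists a, eta. tauto.
    + intro z; split.
      * intro Hz. exists (N (fun x => lt x a) z). split; [exists z; auto | intros x _; auto].
      * intros [B [[eta [Heta ->]] Hz]] x Hx. rewrite (Hz x Hx). auto.
  - apply kBorel_ext with (fun z => forall i, (fun i z => lt i a -> z i = c0 \/ z i = c1) i z);
      [| intro z; tauto].
    apply kBorel_inter. intro i.
    destruct (classic (lt i a)) as [Hi|Hi].
    + apply kBorel_ext with
        (fun z => exists j, (fun j z => (j = c0 /\ z i = c0) \/ (j <> c0 /\ z i = c1)) j z).
      * apply kBorel_union. intro j. apply kBorel_basic. left.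
        exists (fun y => y = i). destruct (classic (j = c0)) as [Hj|Hj].
        -- exists (fun _ => c0). split; [apply (@small_single K Hunc)|].
           intro z; unfold N; split.
           ++ intros [[_ H]|[H _]] y ->; [auto| contradiction].
           ++ intro H; left; split; auto.
        -- exists (fun _ => c1). split; [apply (@small_single K Hunc)|].
           intro z; unfold N; split.
           ++ intros [[H _]|[_ H]] y ->; [contradiction| auto].
           ++ intro H; right; split; auto.
      * intro z; split.
        -- intros [j [[_ H]|[_ H]]] _; auto.
        -- intro H. destruct (H Hi) as [h|h].
           ++ exists c0; left; auto.
           ++ exists c1; right; auto.
    + apply kBorel_ext with (fun z => ~ (fun _ : K -> K => False) z).
      * apply kBorel_compl, kBorel_basic. right. auto.
      * intro z; split; [intros _ H; contradiction | auto].
  - intros [F [HF HU]]. apply (proj2 Hcont).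
    set (zeta := fun (s : nat -> bool) (x : K) =>
      match excluded_middle_informative (exists n, e n = x) with
      | left _ => if s (epsilon (inhabits 0) (fun n => e n = x)) then c1 else c0
      | right _ => c0 end).
    assert (zeta_e : forall s n, zeta s (e n) = if s n then c1 else c0).
    { intros s n. unfold zeta. destruct excluded_middle_informative as [h|h].
      - pose proof (epsilon_spec (inhabits 0) _ h) as h1. apply einj in h1. rewrite h1. auto.
      - exfalso; eauto. }
    assert (zU : forall s, exists i, F i (zeta s)).
    { intro s. apply HU. intros x _. unfold zeta. destruct excluded_middle_informative.
      - destruct (s _); auto.
      - auto. }
    exists (fun s => proj1_sig (constructive_indefinite_description _ (zU s))).
    intros s t Hst.
    pose proof (proj2_sig (constructive_indefinite_description _ (zU s))) as Fs.
    pose proof (proj2_sig (constructive_indefinite_description _ (zU t))) as Ft.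
    simpl in Fs, Ft. rewrite Hst in Fs.
    set (i := proj1_sig (constructive_indefinite_description _ (zU t))) in *.
    destruct (HF i) as [[D [eta [_ Hiff]]] | Hemp]; [| exfalso; exact (Hemp _ Ft)].
    apply Hiff in Fs. apply Hiff in Ft.
    apply functional_extensionality. intro n.
    assert (HD : D (e n)).
    { apply NNPP; intro HnD.
      set (z' := fun x => if excluded_middle_informative (x = e n) then c2 else zeta t x).
      assert (Hz' : F i z').
      { apply Hiff. intros x Hx. unfold z'. destruct excluded_middle_informative as [->|h].
        - contradiction.
        - apply Ft, Hx. }
      assert (Uz : forall x, lt x a -> z' x = c0 \/ z' x = c1) by (apply HU; eauto).
      destruct (Uz (e n) (ea n)) as [h|h]; unfold z' in h;
        destruct excluded_middle_informative as [_|h']; try contradiction; auto. }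
    pose proof (Fs _ HD) as h1. pose proof (Ft _ HD) as h2.
    rewrite zeta_e in h1, h2. rewrite <- h2 in h1.
    destruct (s n), (t n); auto; exfalso; auto.
Qed.
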